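(* Consider the Robust protocol with parameters $k,\varepsilon,c$ (described in the context) and a single round of it that starts at event count $n_0$. Let $R$ be the number of events in the round and, for an event count $n$, let $\hat n$ denote the server's estimate when the event count is $n$. Then \[ \Pr\!\left[\max_{n\in[n_0,\,n_0+R-1]}\frac{|n-\hat n|}{n}>\varepsilon\right]\le 2\exp\!\left(-\min\!\left\{\frac{c^2}{8},\frac{c\sqrt k}{4}\right\}\right). \]
   Context: Distributed counting: a server and $k$ sites; events arrive one at a time, each at some site; $n_i$ is the number of events at site $i$ so far and the event count is $n=\sum_in_i$. Robust protocol with parameters $k$, $\varepsilon>0$, $c\ge1$: each site $i$ keeps a transmission probability $p$ (initially $1$, updated by server broadcasts) and its count $n_i$. On each event at site $i$: $n_i\gets n_i+1$, and independently with probability $p$ the site sends ReportSample to the server. On receiving CountRequest, site $i$ sends its current $n_i$. The server keeps a counter $B=0$, values $\bar n_i=0$, and $p=1$; its estimate is $\hat n=\bar n+B/p$ with $\bar n=\sum_i\bar n_i$. On receiving ReportSample the server sets $B\gets B+1$; if now $B=k$, the round ends and a new round begins: the server broadcasts CountRequest, sets each $\bar n_i$ to the reported exact $n_i$, sets $p\gets\min\{1,c\sqrt k/(\varepsilon\bar n)\}$, broadcasts $p$, and sets $B\gets0$. The probability is over the protocol's randomness during the round. *)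

(* Defs.v *)
From HB Require Import structures.
From mathcomp Require Import all_boot all_order all_algebra.
From mathcomp Require Import reals sequences exp.
Set Implicit Arguments. Unset Strict Implicit. Unset Printing Implicit Defensive.
Import Order.TTheory GRing.Theory Num.Theory.
Local Open Scope ring_scope.

(* Transmission probability used during a round that starts at event count n0:
   the server sets p = min{1, c sqrt k / (eps * nbar)} with nbar = n0 the exact
   count at the start of the round; the very first round (n0 = 0) uses the
   initial value p = 1. *)
Definition round_p {R : realType} (k : nat) (eps c : R) (n0 : nat) : R :=
  if n0 == 0%N then 1 else Num.min 1 (c * Num.sqrt (k%:R) / (eps * n0%:R)).

(* Outcomes of the first N coin flips of the round: w i = true iff the
   (i+1)-th event of the round triggers a ReportSample. *)
Definition coin_weight {R : realType} (p : R) (N : nat) (w : {ffun 'I_N -> bool}) : R :=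
  \prod_(i < N) (if w i then p else 1 - p).

Definition samples (N : nat) (w : {ffun 'I_N -> bool}) (m : nat) : nat :=
  \sum_(i < N | (i < m)%N) (w i : nat).

Definition estimate {R : realType} (p : R) (n0 N : nat) (w : {ffun 'I_N -> bool}) (m : nat) : R :=
  n0%:R + (samples w m)%:R / p.

(* Bad event, restricted to the first N events of the round: some event count
   n = n0 + m with m <= N and n <= n0 + R - 1 (equivalently B_m < k, since the
   round ends exactly when B reaches k) has relative error |n - nhat|/n > eps. *)
Definition bad_event {R : realType} (k : nat) (eps p : R) (n0 N : nat)
    (w : {ffun 'I_N -> bool}) : bool :=
  [exists m : 'I_N.+1,
     (samples w m < k)%N &&
     (eps < `|(n0 + m)%:R - estimate p n0 w m| / (n0 + m)%:R)].

Definition prob_bad {R : realType} (k : nat) (eps c : R) (n0 N : nat) : R :=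
  let p := round_p k eps c n0 in
  \sum_(w : {ffun 'I_N -> bool} | bad_event k eps p n0 w) coin_weight p w.

(* Main.v *)
Require Import Defs.
From HB Require Import structures.
From mathcomp Require Import all_boot all_order all_algebra.
From mathcomp Require Import reals sequences exp.
From mathcomp Require Import ring lra.
Import Order.TTheory GRing.Theory Num.Theory.
Local Open Scope ring_scope.
Set Implicit Arguments. Unset Strict Implicit. Unset Printing Implicit Defensive.

Lemma sum_step (V : nmodType) (N j : nat) (F : 'I_N -> V) (hj : (j < N)%N) :
  \sum_(i < N | (i < j.+1)%N) F i = \sum_(i < N | (i < j)%N) F i + F (Ordinal hj).
Proof.
rewrite (bigD1 (Ordinal hj)) //= addrC; congr (_ + _).
apply: eq_bigl => i; rewrite ltnS leq_eqVlt -val_eqE /=.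
by case: (ltngtP i j).
Qed.

Lemma sum_zero (V : nmodType) (N : nat) (F : 'I_N -> V) :
  \sum_(i < N | (i < 0)%N) F i = 0.
Proof. by rewrite big_pred0. Qed.

Definition flip (N : nat) (j : 'I_N) (w : {ffun 'I_N -> bool}) : {ffun 'I_N -> bool} :=
  [ffun i => if i == j then ~~ w i else w i].

Lemma flipK (N : nat) (j : 'I_N) : involutive (flip j).
Proof.
move=> w; apply/ffunP => i; rewrite !ffunE.
by case: (i == j) => //; rewrite negbK.
Qed.

Lemma sum_pair (R : realType) (N : nat) (j : 'I_N) (F : {ffun 'I_N -> bool} -> R) :
  \sum_w F w = \sum_(w : {ffun 'I_N -> bool} | w j) (F w + F (flip j w)).
Proof.
rewrite (bigID (fun w : {ffun 'I_N -> bool} => w j)) /= big_split /=; congr (_ + _).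
rewrite (reindex_inj (inv_inj (flipK j))) /=.
by apply: eq_bigl => w; rewrite ffunE eqxx negbK.
Qed.

Lemma coin_weight_sum (R : realType) (p : R) (N : nat) :
  \sum_(w : {ffun 'I_N -> bool}) coin_weight p w = 1.
Proof.
rewrite /coin_weight.
have := (bigA_distr_bigA (fun (i : 'I_N) (b : bool) => if b then p else 1 - p)).
move=> <-. rewrite big1 // => i _. rewrite big_bool /=. by rewrite addrC subrK.
Qed.

Lemma coin_weight_flip (R : realType) (p : R) (N : nat) (j : 'I_N) (w : {ffun 'I_N -> bool}) :
  w j ->
  0 <= p <= 1 ->
  exists r, [/\ 0 <= r, coin_weight p w = p * r &
     coin_weight p (flip j w) = (1 - p) * r].
Proof.
move=> wj /andP [h0 h1]; exists (\prod_(i < N | i != j) (if w i then p else 1 - p)).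
split => //.
  by apply: prodr_ge0 => i _; case: (w i) => //; rewrite subr_ge0.
  by rewrite /coin_weight (bigD1 j) //= wj.
rewrite /coin_weight (bigD1 j) //= ffunE eqxx wj /=; congr (_ * _).
by apply: eq_bigr => i hi; rewrite ffunE (negbTE hi).
Qed.

Lemma coin_weight_ge0 (R : realType) (p : R) (N : nat) (w : {ffun 'I_N -> bool}) :
  0 <= p <= 1 -> 0 <= coin_weight p w.
Proof.
case/andP=> h0 h1; apply: prodr_ge0 => i _; case: (w i) => //; by rewrite subr_ge0.
Qed.

Section Ville.
Variables (R : realType) (p a b A : R) (N : nat).
Hypothesis hp : 0 <= p <= 1.
Hypothesis hab : p * expR a + (1 - p) * expR b <= 1.

Definition Yp (w : {ffun 'I_N -> bool}) (m : nat) : R :=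
  \sum_(i < N | (i < m)%N) (if w i then a else b).

Definition hit (j : nat) (w : {ffun 'I_N -> bool}) : bool :=
  [exists m : 'I_N.+1, (m <= j)%N && (A <= Yp w m)].

Definition Hf (j : nat) (w : {ffun 'I_N -> bool}) : R :=
  if hit j w then 1 else expR (Yp w j - A).

Lemma hit_mono j w : hit j w -> hit j.+1 w.
Proof.
case/existsP=> m /andP [hm hA]; apply/existsP; exists m; rewrite hA andbT.
exact: leqW.
Qed.

Lemma expR_ge1 (x : R) : 0 <= x -> 1 <= expR x.
Proof. move=> hx; apply: le_trans (expR_ge1Dx x); lra. Qed.

Lemma Hf_ge0 j w : 0 <= Hf j w.
Proof. rewrite /Hf; case: ifP => // _; exact: ltW (expR_gt0 _). Qed.

Lemma Hf_le j w : Hf j.+1 w <= if hit j w then 1 else expR (Yp w j.+1 - A).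
Proof.
rewrite /Hf; case: (boolP (hit j.+1 w)) => h1; case: (boolP (hit j w)) => h0 //.
- apply: expR_ge1; rewrite subr_ge0.
  case/existsP: h1 => m /andP [hm hA].
  have : val m = j.+1.
    apply/eqP; rewrite eqn_leq hm /=; rewrite ltnNge; apply/negP => hmj.
    by move/negP: h0; apply; apply/existsP; exists m; rewrite hmj.
  by move=> e; rewrite -e.
- by rewrite (hit_mono h0) in h1.
Qed.

Lemma Yp_flip j (jj : 'I_N) w m : (m <= j)%N -> val jj = j -> Yp (flip jj w) m = Yp w m.
Proof.
move=> hm hj; apply: eq_bigr => i hi; rewrite ffunE.
case: eqP => // e; exfalso; move: hi; rewrite e hj => hi.
by move: (leq_trans hi hm); rewrite ltnn.
Qed.

Lemma hit_flip j (jj : 'I_N) w : val jj = j -> hit j (flip jj w) = hit j w.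
Proof.
move=> hj; apply: eq_existsb => m; case: (boolP (m <= j)%N) => //= hm.
by rewrite (Yp_flip w hm hj).
Qed.

Lemma Hf_flip j (jj : 'I_N) w : val jj = j -> Hf j (flip jj w) = Hf j w.
Proof. by move=> hj; rewrite /Hf (hit_flip w hj) (Yp_flip w (leqnn j) hj). Qed.

Lemma Hf_step j (hj : (j < N)%N) :
  \sum_w coin_weight p w * Hf j.+1 w <= \sum_w coin_weight p w * Hf j w.
Proof.
rewrite (sum_pair (Ordinal hj)) [X in _ <= X](sum_pair (Ordinal hj)).
apply: ler_sum => w wj.
have [r [r0 e1 e2]] := coin_weight_flip wj hp; rewrite e1 e2.
have hv : val (Ordinal hj) = j by [].
rewrite (Hf_flip w hv).
have Y1 : Yp w j.+1 = Yp w j + a by rewrite /Yp sum_step wj.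
have Y2 : Yp (flip (Ordinal hj) w) j.+1 = Yp w j + b.
  have := Yp_flip w (leqnn j) hv; rewrite /Yp sum_step => ->.
  by rewrite ffunE eqxx wj.

have L1 := Hf_le j w; have L2 := Hf_le j (flip (Ordinal hj) w).
rewrite (hit_flip w hv) Y2 in L2; rewrite Y1 in L1.
move: hp => /andP [p0 p1].
have pr0 : 0 <= p * r by apply: mulr_ge0.
have qr0 : 0 <= (1 - p) * r by apply: mulr_ge0; lra.
have HH : Hf j w = if hit j w then 1 else expR (Yp w j - A) by [].
rewrite HH; case: (hit j w) L1 L2 => L1 L2.
- have := ler_wpM2l pr0 L1; have := ler_wpM2l qr0 L2; lra.
- apply: le_trans (lerD (ler_wpM2l pr0 L1) (ler_wpM2l qr0 L2)) _.
  rewrite !expRD.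
  have ea := expR_gt0 a; have eb := expR_gt0 b; have ey := expR_gt0 (Yp w j);
  have eA := expR_gt0 (- A).
  have : r * (expR (Yp w j) * expR (- A)) * (p * expR a + (1 - p) * expR b)
         <= r * (expR (Yp w j) * expR (- A)) * 1.
    apply: ler_wpM2l => //; apply: mulr_ge0 => //; apply: mulr_ge0; exact: ltW.
  move=> H; apply: le_trans _ (le_trans H _); rewrite le_eqVlt; apply/orP; left; apply/eqP; ring.
Qed.

Lemma Hf_bound j : (j <= N)%N -> \sum_w coin_weight p w * Hf j w <= expR (- A).
Proof.
elim: j => [_|j IH hj].
- apply: le_trans (_ : \sum_(w : {ffun 'I_N -> bool}) coin_weight p w * expR (- A) <= _).
    apply: ler_sum => w _; apply: ler_wpM2l; first exact: coin_weight_ge0.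
    rewrite /Hf /Yp sum_zero sub0r; case: ifP => // h.
    apply: expR_ge1; case/existsP: h => m /andP [hm hA].
    move: hm; rewrite leqn0 => /eqP e; move: hA; rewrite /Yp e sum_zero; lra.
  by rewrite -mulr_suml coin_weight_sum mul1r.
- exact: le_trans (Hf_step hj) (IH (ltnW hj)).
Qed.

Lemma ville :
  \sum_(w | [exists m : 'I_N.+1, A <= Yp w m]) coin_weight p w <= expR (- A).
Proof.
apply: le_trans (Hf_bound (leqnn N)).
rewrite big_mkcond /=; apply: ler_sum => w _.
case: ifP => h.
- rewrite /Hf; have -> : hit N w.
    case/existsP: h => m hm; apply/existsP; exists m; rewrite hm andbT.
    by rewrite -ltnS ltn_ord.
  by rewrite mulr1.
- by apply: mulr_ge0; [exact: coin_weight_ge0 | exact: Hf_ge0].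
Qed.

End Ville.

Lemma expN_quad (R : realType) (t : R) : 0 <= t -> expR (- t) <= 1 - t + 5/8 * t ^+ 2.
Proof.
move=> t0.
have h := expR_ge1Dx (t / 4).
set u := expR (t / 4) in h.
have u0 : 0 < u by exact: expR_gt0.
have e : expR t = u ^+ 4 by rewrite /u -expRM_natl; congr expR; field.
have v0 : 0 <= 1 + t / 4 by lra.
have hv : (1 + t / 4) ^+ 4 <= u ^+ 4.
  by apply: lerXn2r => //; rewrite qualifE /=; lra.
rewrite expRN e -div1r ler_pdivrMr; last exact: exprn_gt0.
set P := 1 - t + 5 / 8 * t ^+ 2.
have P0 : 0 <= P by rewrite /P; nra.
apply: le_trans (ler_wpM2l P0 hv).
have -> : P * (1 + t / 4) ^+ 4 = 1 + t^+3 * (5/16 + 45/256 * t + 9/256 * t^+2 + 5/2048 * t^+3).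
  by rewrite /P; field.
have : 0 <= t ^+ 3 * (5 / 16 + 45 / 256 * t + 9 / 256 * t ^+ 2 + 5 / 2048 * t ^+ 3).
  apply: mulr_ge0; first exact: exprn_ge0.
  have := exprn_ge0 2 t0; have := exprn_ge0 3 t0; lra.
lra.
Qed.

Lemma exp_quad (R : realType) (t : R) : 0 <= t -> t <= 1/2 -> expR t <= 1 + t + 2 * t ^+ 2.
Proof.
move=> t0 t1.
have h := expR_ge1Dx (- t).
have e : expR t = (expR (- t))^-1 by rewrite expRN invrK.
have en := expR_gt0 (- t).
rewrite e -div1r ler_pdivrMr //.
set X := 1 + t + 2 * t ^+ 2.
have X0 : 0 <= X by rewrite /X; nra.
apply: le_trans (ler_wpM2l X0 h).
rewrite /X; nra.
Qed.

Lemma cond_ab (R : realType) (p x y : R) : 0 <= p <= 1 ->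
  x + p * (expR y - 1) <= 0 -> p * expR (x + y) + (1 - p) * expR x <= 1.
Proof.
case/andP=> p0 p1 h.
have ex := expR_gt0 x.
have e1 := expR_ge1Dx (p * (expR y - 1)).
have -> : p * expR (x + y) + (1 - p) * expR x = expR x * (1 + p * (expR y - 1)).
  by rewrite expRD; ring.
apply: le_trans (ler_wpM2l (ltW ex) e1) _.
rewrite -expRD; apply: (@le_trans _ _ (expR 0)); [by rewrite ler_expR | by rewrite expR0].
Qed.

Lemma Yp_samples (R : realType) (a b : R) N (w : {ffun 'I_N -> bool}) m : (m <= N)%N ->
  Yp a b w m = (samples w m)%:R * a + (m%:R - (samples w m)%:R) * b.
Proof.
elim: m => [_|m IH hm].
  by rewrite /Yp /samples !sum_zero /=; ring.
have := IH (ltnW hm); rewrite /Yp /samples !(sum_step _ hm) => ->.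
by case: (w _); rewrite /= ?natrD ?addn0 ?addn1 ?natrS ?addr0 /=; ring.
Qed.

Lemma samples_all N (w : {ffun 'I_N -> bool}) m : [forall i, w i] -> (m <= N)%N ->
  samples w m = m.
Proof.
move=> /forallP hw; elim: m => [_|m IH hm]; first by rewrite /samples sum_zero.
rewrite /samples (sum_step _ hm) -/(samples w m) IH ?(ltnW hm) // hw.
exact: addn1.
Qed.
Unset Implicit Arguments. Set Strict Implicit. Set Printing Implicit Defensive.

Lemma sum_sub2 (R : realType) (T : finType) (P Q1 Q2 : pred T) (f : T -> R) :
  (forall x, 0 <= f x) -> (forall x, P x -> Q1 x || Q2 x) ->
  \sum_(x | P x) f x <= \sum_(x | Q1 x) f x + \sum_(x | Q2 x) f x.
Proof.
move=> f0 h; rewrite !(big_mkcond P) !(big_mkcond Q1) !(big_mkcond Q2) -big_split /=.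
apply: ler_sum => x _; case: (boolP (P x)) => hP.
- move: (h x hP); case: (Q1 x); case: (Q2 x) => //= _; rewrite ?addr0 ?add0r //; have := f0 x; lra.
- by case: ifP; case: ifP => _ _; rewrite ?addr0 //; apply: addr_ge0.
Qed.

Lemma sum_sub1 (R : realType) (T : finType) (P Q : pred T) (f : T -> R) :
  (forall x, 0 <= f x) -> (forall x, P x -> Q x) ->
  \sum_(x | P x) f x <= \sum_(x | Q x) f x.
Proof.
move=> f0 h; rewrite !(big_mkcond P) !(big_mkcond Q) /=.
apply: ler_sum => x _; case: (boolP (P x)) => hP; first by rewrite (h x hP).
by case: ifP.
Qed.

Theorem mainTheorem8 (R : realType) (k : nat) (eps c : R) (n0 N : nat) :
  (0 < k)%N -> 0 < eps -> 1 <= c ->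
  prob_bad k eps c n0 N <=
    2 * expR (- Num.min (c ^+ 2 / 8) (c * Num.sqrt (k%:R) / 4)).
Proof.
move=> k0 e0 c1.
rewrite /prob_bad /=.
set p := round_p k eps c n0.
set mn := Num.min _ _.
have emn := expR_gt0 (- mn).
have [p1|[hn [hp hq]]] : p = 1 \/ (n0 != 0%N /\ p = c * Num.sqrt (k%:R) / (eps * n0%:R)
     /\ c * Num.sqrt (k%:R) / (eps * n0%:R) < 1).
  rewrite /p /round_p; case: eqP => [_|hn]; first by left.
  rewrite minEle; case: ifP => h; first by left.
  by right; split; [apply/eqP | split => //; rewrite ltNge h].
- rewrite p1 big1; first lra.
  move=> w hbad; case: (boolP [forall i, w i]) => hall.
  + exfalso; move: hbad; rewrite /bad_event; case/existsP => m /andP [_ hlt].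
    move: hlt; rewrite /estimate samples_all // ?divr1 ?natrD ?subrr ?normr0 ?mul0r; last first.
      by rewrite -ltnS ltn_ord.
    lra.
  + move/forallPn: hall => [i hi].
    by rewrite /coin_weight (bigD1 i) //= (negbTE hi) subrr mul0r.
set K := (k%:R : R).
set s := c * Num.sqrt K.
set n' := (n0%:R : R).
have K0 : 0 < K by rewrite /K ltr0n.
have sq0 : 0 < Num.sqrt K by rewrite sqrtr_gt0.
have s0 : 0 < s by rewrite /s; apply: mulr_gt0 => //; lra.
have s2 : s ^+ 2 = c ^+ 2 * K by rewrite /s exprMn sqr_sqrtr // ltW.
have n'0 : 0 < n' by rewrite /n' ltr0n lt0n.
have p0 : 0 < p by rewrite hp; apply: divr_gt0 => //; apply: mulr_gt0.
have hpe : p * eps * n' = s by rewrite hp /n' /s; field; apply/andP; split; apply/lt0r_neq0.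
have pr : 0 <= p <= 1 by apply/andP; split; [exact: ltW | rewrite hp; exact: ltW].
have mn_le : mn <= c ^+ 2 / 8 by rewrite /mn ge_min lexx.
have mn_le2 : mn <= s / 4 by rewrite /mn ge_min lexx orbT.
set tL := 4 * s / (5 * (K + s)).
set GL := 5 / 8 * tL ^+ 2.
set AL := tL * s - GL * (K + s).
have tL0 : 0 <= tL by rewrite /tL; apply: divr_ge0; lra.
have tL1 : tL <= 4 / 5 by rewrite /tL ler_pdivrMr; lra.
have GL0 : 0 <= GL by rewrite /GL; have := exprn_ge0 2 tL0; lra.
have tGL : 0 <= tL - GL by rewrite /GL; nra.
have AL_ge : mn <= AL.
  have eAL : AL = 2 * s ^+ 2 / (5 * (K + s)) by rewrite /AL /GL /tL; field; lra.
  rewrite eAL ler_pdivlMr; last lra.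
  have [hs|hs] := lerP s (2 * K).
  + apply: le_trans (ler_wpM2r _ mn_le) _; first lra.
    rewrite s2; have c20 : 0 <= c ^+ 2 by exact: sqr_ge0.
    have := mulr_ge0 c20 (_ : 0 <= 11 * K - 5 * s); nra.
  + apply: le_trans (ler_wpM2r _ mn_le2) _; first lra.
    have := mulr_ge0 (ltW s0) (_ : 0 <= 3 * s - 5 * K); nra.
have condL : p * expR ((tL * p - p * GL) + - tL) + (1 - p) * expR (tL * p - p * GL) <= 1.
  apply: cond_ab => //.
  have := expN_quad tL0; rewrite -/GL => h.
  have := ler_wpM2l (ltW p0) h; lra.
have villeL := @ville R p _ _ AL N pr condL.
have bad_dev : forall w : {ffun 'I_N -> bool}, bad_event k eps p n0 w -> exists m : 'I_N.+1,
    [/\ (m <= N)%N, (samples w m)%:R < K & s < `|p * (m%:R) - (samples w m)%:R|].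
  move=> w; rewrite /bad_event => /existsP [m /andP [hB he]]; exists m; split.
  - by rewrite -ltnS ltn_ord.
  - by rewrite /K ltr_nat.
  move: he; rewrite /estimate natrD -/n'.
  set B := ((samples w m)%:R : R); set M := (m%:R : R).
  have M0 : 0 <= M by rewrite /M ler0n.
  have x0 : 0 < n' + M by lra.
  rewrite ltr_pdivlMr // => he.
  have -> : p * M - B = p * (M - B / p) by field; apply/lt0r_neq0.
  rewrite normrM gtr0_norm //.
  have e1 : n' + M - (n' + B / p) = M - B / p by ring.
  rewrite e1 in he.
  have h : p * (eps * (n' + M)) < p * `|M - B / p| by rewrite ltr_pM2l.
  have : 0 <= p * eps * M by apply: mulr_ge0 => //; apply: mulr_ge0; lra.
  have : p * (eps * (n' + M)) = p * eps * n' + p * eps * M by ring.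
  lra.
have lowerOK : forall (w : {ffun 'I_N -> bool}) (m : 'I_N.+1), (m <= N)%N -> (samples w m)%:R < K ->
    s < p * (m%:R) - (samples w m)%:R -> AL <= Yp ((tL * p - p * GL) + - tL) (tL * p - p * GL) w m.
  move=> w m hm hB hD; rewrite Yp_samples //.
  move: hB hD; set B := ((samples w m)%:R : R); set M := (m%:R : R) => hB hD.
  have -> : B * (tL * p - p * GL + - tL) + (M - B) * (tL * p - p * GL)
     = tL * (p * M - B) - GL * (p * M) by ring.
  have := mulr_ge0 tGL (_ : 0 <= p * M - B - s); have := mulr_ge0 GL0 (_ : 0 <= K - B).
  rewrite /AL; nra.
have wge0 : forall w : {ffun 'I_N -> bool}, 0 <= coin_weight p w.
  by move=> w; apply: coin_weight_ge0.
have eL : expR (- AL) <= expR (- mn) by rewrite ler_expR; lra.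
have [hsK|hsK] := ltrP s K; last first.
  apply: le_trans (@sum_sub1 R _ _ (fun w => [exists m : 'I_N.+1,
      AL <= Yp ((tL * p - p * GL) + - tL) (tL * p - p * GL) w m]) _ wge0 _) _.
    move=> w /bad_dev [m [hm hB hdev]]; apply/existsP; exists m.
    apply: lowerOK => //; move: hdev; rewrite ltr_normr => /orP [//|h].
    have : 0 <= p * m%:R by apply: mulr_ge0; [lra | rewrite ler0n].
    have : 0 <= ((samples w m)%:R : R) by rewrite ler0n.
    lra.
  apply: le_trans villeL _; lra.
set tU := s / (4 * K).
set HU := 2 * tU ^+ 2.
set AU := tU * s - K * HU.
have tU0 : 0 <= tU by rewrite /tU; apply: divr_ge0; lra.
have tU1 : tU <= 1 / 2 by rewrite /tU ler_pdivrMr; lra.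
have HU0 : 0 <= HU by rewrite /HU; have := exprn_ge0 2 tU0; lra.
have AU_eq : AU = c ^+ 2 / 8.
  have : AU = s ^+ 2 / (8 * K) by rewrite /AU /HU /tU; field; lra.
  by rewrite s2 => ->; field; lra.
have condU : p * expR ((- tU * p - p * HU) + tU) + (1 - p) * expR (- tU * p - p * HU) <= 1.
  apply: cond_ab => //.
  have := exp_quad tU0 tU1; rewrite -/HU => h.
  have := ler_wpM2l (ltW p0) h; lra.
have villeU := @ville R p _ _ AU N pr condU.
have upperOK : forall (w : {ffun 'I_N -> bool}) (m : 'I_N.+1), (m <= N)%N -> (samples w m)%:R < K ->
    s < - (p * (m%:R) - (samples w m)%:R) -> AU <= Yp ((- tU * p - p * HU) + tU) (- tU * p - p * HU) w m.
  move=> w m hm hB hD; rewrite Yp_samples //.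
  move: hB hD; set B := ((samples w m)%:R : R); set M := (m%:R : R) => hB hD.
  have M0 : 0 <= p * M by apply: mulr_ge0; [lra | rewrite /M ler0n].
  have -> : B * (- tU * p - p * HU + tU) + (M - B) * (- tU * p - p * HU)
     = tU * (B - p * M) - HU * (p * M) by ring.
  have := mulr_ge0 tU0 (_ : 0 <= B - p * M - s); have := mulr_ge0 HU0 (_ : 0 <= K - p * M).
  rewrite /AU; nra.
apply: le_trans (@sum_sub2 R _ _ (fun w => [exists m : 'I_N.+1,
      AL <= Yp ((tL * p - p * GL) + - tL) (tL * p - p * GL) w m])
   (fun w => [exists m : 'I_N.+1,
      AU <= Yp ((- tU * p - p * HU) + tU) (- tU * p - p * HU) w m]) _ wge0 _) _.
  move=> w /bad_dev [m [hm hB hdev]]; move: hdev; rewrite ltr_normr => /orP [h|h].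
  - by apply/orP; left; apply/existsP; exists m; apply: lowerOK.
  - by apply/orP; right; apply/existsP; exists m; apply: upperOK.
have eU : expR (- AU) <= expR (- mn) by rewrite ler_expR AU_eq; lra.
have := lerD villeL villeU; lra.
Qed.
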